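(* Let $n,m,k,t\ge 1$ and $r\ge 0$ be integers with $n\ge k$ and $m\ge \lceil k/t\rceil + r$. Then the minimum total storage $\sum_{i=1}^m|S_i|$ of an erasure combinatorial batch code for consecutive files with parameters $n,m,k,t,r$ equals $(r+1)n$.
   Context: Files are indexed by $X=\{1,\dots,n\}$ in their linear order, and $m$ servers store subsets $S_1,\dots,S_m\subseteq X$. The family $(S_1,\dots,S_m)$ is an erasure combinatorial batch code for consecutive files with parameters $n,m,k,t,r$ if for every set $X'=\{a,a+1,\dots,a+c-1\}\subseteq X$ of $c\le k$ consecutive indices and every subset $J\subseteq\{1,\dots,m\}$ with $|J|\ge m-r$, there exist subsets $C_j\subseteq S_j$ ($j\in J$) with $|C_j|\le t$ and $X'=\bigcup_{j\in J}C_j$. The total storage is $\sum_{i=1}^m |S_i|$. *)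

(* Defs.v *)
From mathcomp Require Import all_boot.
Set Implicit Arguments. Unset Strict Implicit. Unset Printing Implicit Defensive.

(* Files X = {1,...,n} are represented by 'I_n (file i+1 <-> ordinal i);
   servers {1,...,m} by 'I_m.  A code is S : 'I_m -> {set 'I_n}. *)

Definition consec (n a c : nat) : {set 'I_n} :=
  [set x : 'I_n | (a <= x) && (x < a + c)].

Definition ecbc_consec (n m k t r : nat) (S : 'I_m -> {set 'I_n}) : Prop :=
  forall (a c : nat), c <= k -> a + c <= n ->
  forall J : {set 'I_m}, m - r <= #|J| ->
  exists C : 'I_m -> {set 'I_n},
    (forall j, j \in J -> (C j \subset S j) /\ #|C j| <= t) /\
    consec n a c = \bigcup_(j in J) C j.

Definition total_storage {n m : nat} (S : 'I_m -> {set 'I_n}) : nat :=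
  \sum_(i < m) #|S i|.

Definition ceil_div (a b : nat) : nat := (a + b - 1) %/ b.
Arguments ecbc_consec : clear implicits.

(* Main.v *)
Require Import Defs.
From mathcomp Require Import all_boot.
From mathcomp Require Import zify.
Set Implicit Arguments. Unset Strict Implicit.

Lemma card_interval m lo hi : hi <= m ->
  #|[set s : 'I_m | (lo <= s) && (s < hi)]| = hi - lo.
Proof.
move=> him.
rewrite cardsE -sum1_card big_mkcond /=.
rewrite -(big_mkord xpredT (fun i => if (lo <= i) && (i < hi) then 1 else 0)).
case: (leqP lo hi) => hl.
- rewrite (@big_cat_nat _ _ _ lo 0 m) /= ?(leq_trans hl him) //.
  rewrite (@big_cat_nat _ _ _ hi lo m) /=  //.
  rewrite big1_seq; last first.
    move=> i /andP[_]; rewrite mem_index_iota => ?; case: ifP => // ?; lia.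
  rewrite [X in _ + (_ + X)]big1_seq; last first.
    move=> i /andP[_]; rewrite mem_index_iota => ?; case: ifP => // ?; lia.
  rewrite add0n addn0.
  rewrite -[RHS]muln1 -sum_nat_const_nat big_seq_cond [RHS]big_seq_cond.
  apply: eq_bigr => i; rewrite mem_index_iota andbT => ->; done.
- rewrite big1 //; last first.
  move=> i _; case: ifP => // /andP[a b]; lia.
  lia.
Qed.

Lemma double_count n m (S : 'I_m -> {set 'I_n}) :
  total_storage S = \sum_(x < n) #|[set s | x \in S s]|.
Proof.
rewrite /total_storage.
transitivity (\sum_(s < m) \sum_(x < n) ((x \in S s) : nat)).
  apply: eq_bigr => s _; rewrite -sum1_card big_mkcond /=.
  by apply: eq_bigr => x _; case: (x \in S s).
rewrite exchange_big /=; apply: eq_bigr => x _.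
rewrite cardsE -sum1_card [RHS]big_mkcond /=; apply: eq_bigr => s _.
by case: (boolP (x \in S s)) => h; rewrite ?h /=; move: h; rewrite /in_mem /= => h; rewrite ?h // (negbTE h).
Qed.
Lemma rank_exists m (J : {set 'I_m}) i : i < #|J| ->
  exists2 s : 'I_m, s \in J & #|[set y in J | y < s]| = i.
Proof.
suff H : forall N, i < #|[set y in J | y < N]| ->
  exists2 s : 'I_m, s \in J & #|[set y in J | y < s]| = i.
  move=> hi; apply: (H m).
  suff -> : [set y in J | y < m] = J by [].
  by apply/setP => y; rewrite inE ltn_ord andbT.
elim=> [|N IH].
  suff -> : [set y in J | y < 0] = set0 by rewrite cards0.
  by apply/setP => y; rewrite !inE ltn0 andbF.
move=> hN.
case: (ltnP i #|[set y in J | y < N]|) => hiN; first exact: IH.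
have [s [sJ sN]] : exists s : 'I_m, s \in J /\ val s = N.
  case: (pickP [pred y : 'I_m | (y \in J) && (val y == N)]) => [y /andP[yJ /eqP yN]|H].
    by exists y.
  exfalso; move: hN; apply/negP; rewrite -leqNgt.
  apply: (leq_trans _ hiN); apply: subset_leq_card.
  apply/subsetP => y; rewrite !inE => /andP[yJ].
  rewrite ltnS leq_eqVlt => /orP[/eqP yN|->]; last by rewrite yJ.
  by move: (H y); rewrite /= yJ yN eqxx.
have sN2 : (s : nat) = N by [].
exists s => //.
have E : [set y in J | y < N.+1] = s |: [set y in J | y < N].
  apply/setP => y; rewrite !inE ltnS leq_eqVlt.
  case: (boolP (y == s)) => [/eqP->|ys]; first by rewrite sJ sN eqxx.
  have -> : (val y == N) = false by apply/negbTE; apply: contra ys => /eqP h; apply/eqP/val_inj; rewrite h sN.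
  by [].
move: hN; subst N; rewrite E cardsU1 !inE ltnn andbF /= => hN.
move: hN hiN => h1 h2; apply/eqP; rewrite eqn_leq h2 /=; exact: h1.
Qed.

Lemma rank_bound m (J : {set 'I_m}) (s : 'I_m) :
  #|[set y in J | y < s]| <= s /\ s <= #|[set y in J | y < s]| + (m - #|J|).
Proof.
have hP : #|[set y : 'I_m | (0 <= y) && (y < s)]| = s.
  by rewrite card_interval ?subn0 // ltnW.
have E : [set y in J | y < s] = [set y : 'I_m | (0 <= y) && (y < s)] :&: J.
  by apply/setP => y; rewrite !inE andbC.
have hC := cardsC J; rewrite card_ord in hC.
have hD : #|[set y : 'I_m | (0 <= y) && (y < s)] :\: J| <= #|~: J|.
  apply: subset_leq_card; apply/subsetP => y; rewrite !inE => /andP[-> _] //.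
have := cardsID J [set y : 'I_m | (0 <= y) && (y < s)].
rewrite -E hP => h; split; first exact: (leq_trans (leq_addr _ _) (eq_leq h)).
have hC2 : m - #|J| = #|~: J| by rewrite -{1}hC addKn.
apply: (leq_trans (eq_leq (esym h))); by rewrite leq_add2l hC2.
Qed.
Lemma load_bound n a c q t i : 0 < q -> 0 < t -> c <= q * t ->
  #|[set x : 'I_n | (a <= x) && (x < a + c) && (x %% q == i)]| <= t.
Proof.
case: t => [//|t'] q0 _ hc.
set B := [set x : 'I_n | _].
pose f (x : 'I_n) : 'I_t'.+1 := inord ((x - a) %/ q).
have hlt : forall x, x \in B -> (x - a) %/ q < t'.+1.
  move=> x; rewrite inE => /andP[/andP[h1 h2] _].
  rewrite ltn_divLR //; lia.
rewrite -(card_in_imset (f := f)).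
  by apply: leq_trans (max_card _) _; rewrite card_ord.
move=> x y xB yB /(congr1 (@nat_of_ord _)); rewrite /f !inordK ?hlt // => hd.
have := xB; have := yB; rewrite !inE => /andP[/andP[y1 y2] /eqP ym] /andP[/andP[x1 x2] /eqP xm].
have hm : (x - a) %% q = (y - a) %% q.
  apply/eqP; rewrite -(eqn_modDl a) !subnKC //; apply/eqP; by rewrite xm ym.
apply: val_inj => /=.
rewrite -(subnKC x1) -(subnKC y1) (divn_eq (x - a) q) (divn_eq (y - a) q) hd hm //.
Qed.

Theorem mainTheorem3 (n m k t r : nat) :
  1 <= n -> 1 <= m -> 1 <= k -> 1 <= t -> k <= n ->
  ceil_div k t + r <= m ->
  (exists S : 'I_m -> {set 'I_n},
      ecbc_consec n m k t r S /\ total_storage S = (r + 1) * n) /\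
  (forall S : 'I_m -> {set 'I_n},
      ecbc_consec n m k t r S -> (r + 1) * n <= total_storage S).
Proof.
move=> n1 m1 k1 t1 kn hm.
have q1 : 0 < ceil_div k t by rewrite /ceil_div divn_gt0 //; lia.
have hkq : k <= ceil_div k t * t.
  rewrite /ceil_div; have := divn_eq (k + t - 1) t; have := ltn_pmod (k + t - 1) t1.
  lia.
move: q1 hkq hm; set q := ceil_div k t => q1 hkq hm.
have sumc : \sum_(x < n) (r + 1) = (r + 1) * n by rewrite sum_nat_const card_ord mulnC.
split.
- exists (fun s : 'I_m => [set x : 'I_n | (x %% q <= s) && (s <= x %% q + r)]).
  split.
  + move=> a c hc hac J hJ.
    exists (fun s : 'I_m => [set x : 'I_n | (x \in consec n a c) && (x %% q <= s) && (s <= x %% q + r) && (x %% q == #|[set y in J | y < s]|)]).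
    split.
    * move=> j _; split.
        by apply/subsetP => x; rewrite !inE => /andP[/andP[/andP[_ ->] ->] _].
      apply: leq_trans (@load_bound n a c _ _ #|[set y in J | y < j]| q1 t1 _); last first.
        exact: leq_trans hc hkq.
      apply: subset_leq_card; apply/subsetP => x; rewrite !inE.
      by move=> /andP[/andP[/andP[-> _] _] ->].
    * apply/setP => x; apply/idP/idP.
      - move=> hx.
        have xq : x %% q < #|J|.
          have := ltn_pmod x q1; lia.
        have [s sJ rs] := rank_exists xq.
        have [b1 b2] := rank_bound J s.
        apply/bigcupP; exists s => //; rewrite inE hx -rs eqxx b1 andbT /=.
        apply: leq_trans b2 _; rewrite leq_add2l; lia.
      - move/bigcupP => [j _]; rewrite !inE => /andP[/andP[/andP[-> _] _] _] //.
  + rewrite double_count -sumc; apply: eq_bigr => x _.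
    have -> : [set s : 'I_m | x \in [set x0 : 'I_n | (x0 %% q <= s) && (s <= x0 %% q + r)]]
        = [set s : 'I_m | (x %% q <= s) && (s < x %% q + r.+1)].
      by apply/setP => s; rewrite !inE addnS ltnS.
    rewrite card_interval; first lia.
    have := ltn_pmod x q1; lia.
- move=> S hS; rewrite double_count -sumc; apply: leq_sum => x _.
  rewrite leqNgt; apply/negP => hlt.
  set T := [set s | x \in S s] in hlt.
  have hJ : m - r <= #|~: T|.
    have := cardsC T; rewrite card_ord; lia.
  have hx1 : x + 1 <= n by rewrite addn1 ltn_ord.
  have [C [HC HU]] := hS x 1 k1 hx1 (~: T) hJ.
  have : x \in consec n x 1 by rewrite inE leqnn addn1 ltnSn.
  rewrite HU => /bigcupP[j jJ xC].
  have [sub _] := HC j jJ.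
  have xS := subsetP sub x xC.
  by move: jJ; rewrite !inE xS.
Qed.
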